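(* Let $t$ be a Pólya tree with $k\ge 2$ nodes, let $w(t)=\ell(t)/k!$, and let $\tilde\rho=1+\epsilon$ be the smallest positive real number satisfying $\int_0^{\tilde\rho} e^{-w(t)v^k}\,dv = 1$ (the dominant singularity of $S_t$). Then \[ \tilde\rho = 1+\epsilon < 1 + \frac{2w(t)}{k}. \]
   Context: A Pólya tree is an unlabeled rooted non-plane tree. For a Pólya tree $t$ with $k$ nodes, $\ell(t)$ is the number of labelings of its nodes by $1,\dots,k$ that increase along every path from the root. $S_t(z)=\ln\frac{1}{1-\int_0^z e^{-w(t)v^k}\,dv}-w(t)z^k$ is the exponential generating function of recursive trees (increasingly labeled rooted non-plane trees) having no fringe subtree of shape $t$; its dominant singularity is the smallest positive solution of the equation above. *)

(* Defs.v *)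
From Stdlib Require Import Reals Lra Lia List Permutation Arith.
From Stdlib Require Import ClassicalDescription.
From Coquelicot Require Import Coquelicot.
Import ListNotations.
Open Scope R_scope.

(* Plane rooted trees (rose trees); a Polya tree is such a tree up to
   reordering of children, i.e. up to the relation [iso] below. *)
Inductive tree : Type := Node : list tree -> tree.

Fixpoint tsize (t : tree) : nat :=
  match t with
  | Node ts => S ((fix sz (l : list tree) : nat :=
                     match l with nil => 0%nat | u :: l' => (tsize u + sz l')%nat end) ts)
  end.

Inductive iso : tree -> tree -> Prop :=
| iso_node : forall ts ts' us,
    Forall2 iso ts us -> Permutation us ts' -> iso (Node ts) (Node ts').

(* A recursive tree (increasingly labelled rooted non-plane tree) on the nodes
   0,1,...,k-1 (label i+1 in the paper is node i; node 0 is the root) is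
   determined by its parent list [p_1; ...; p_(k-1)] with p_i < i
   (p_i = parent of node i).  [pars n] enumerates all such lists of length n. *)
Fixpoint pars (n : nat) : list (list nat) :=
  match n with
  | O => [nil]
  | S m => flat_map (fun l => map (fun j => l ++ [j]) (seq 0 (S m))) (pars m)
  end.

Definition children (k : nat) (ps : list nat) (v : nat) : list nat :=
  filter (fun i => Nat.eqb (nth (i - 1) ps 0%nat) v) (seq 1 (k - 1)).

Fixpoint build (k : nat) (ps : list nat) (fuel v : nat) : tree :=
  match fuel with
  | O => Node nil
  | S f => Node (map (build k ps f) (children k ps v))
  end.

Definition shape (k : nat) (ps : list nat) : tree := build k ps k 0%nat.

Definition decP (P : Prop) : bool :=
  if excluded_middle_informative P then true else false.

(* ell(t): number of increasing labellings of t, i.e. number of recursive trees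
   on k = |t| nodes whose shape is the Polya tree t *)
Definition ell (t : tree) : nat :=
  let k := tsize t in
  length (filter (fun ps => decP (iso (shape k ps) t)) (pars (k - 1))).

Definition wt (t : tree) : R := INR (ell t) / INR (fact (tsize t)).

Definition Ft (t : tree) (x : R) : R :=
  RInt (fun v => exp (- (wt t * v ^ tsize t))) 0 x.

Definition is_rho_tilde (t : tree) (rho : R) : Prop :=
  0 < rho /\ Ft t rho = 1 /\ (forall x, 0 < x -> Ft t x = 1 -> rho <= x).

(* Main.v *)
Require Import Defs.
From Stdlib Require Import Reals.
From Coquelicot Require Import Coquelicot.
From Stdlib Require Import Lra Lia List Permutation Arith.
From Stdlib Require Import ClassicalDescription.
Import ListNotations.
Local Open Scope nat_scope.

Fixpoint tree_ind2 (Pr : tree -> Prop) (H : forall ts, Forall Pr ts -> Pr (Node ts)) (t : tree) : Pr t :=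
  match t with
  | Node ts => H ts ((fix f (l : list tree) : Forall Pr l :=
       match l with nil => Forall_nil _ | u :: l' => Forall_cons _ (tree_ind2 Pr H u) (f l') end) ts)
  end.

Fixpoint sz (l : list tree) : nat := match l with nil => 0%nat | u :: l' => (tsize u + sz l')%nat end.

Lemma tsize_node ts : tsize (Node ts) = S (sz ts).
Proof. reflexivity. Qed.

Lemma tsize_pos t : (1 <= tsize t)%nat.
Proof. destruct t; simpl; lia. Qed.

Definition go (P : tree -> nat -> list nat) (o : nat) :=
  fix go (l : list tree) (c : nat) : list nat :=
    match l with nil => nil | u :: l' => o :: P u c ++ go l' (c + tsize u)%nat end.

Fixpoint PL (t : tree) (o : nat) : list nat :=
  match t with Node ts => go PL o ts (S o) end.

Fixpoint offs (l : list tree) (c : nat) : list nat :=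
  match l with nil => nil | u :: l' => c :: offs l' (c + tsize u)%nat end.

Lemma PL_len : forall t o, length (PL t o) = (tsize t - 1)%nat.
Proof.
  apply (tree_ind2 (fun t => forall o, length (PL t o) = (tsize t - 1)%nat)).
  intros ts H o. rewrite tsize_node. simpl. generalize (S o).
  induction H; intro c; simpl; auto.
  rewrite length_app, H, IHForall. pose proof (tsize_pos x). lia.
Qed.

Lemma go_len o ts c : length (go PL o ts c) = sz ts.
Proof.
  revert c; induction ts; intro c; simpl; auto.
  rewrite length_app, PL_len, IHts. pose proof (tsize_pos a). lia.
Qed.

Lemma PL_range : forall t o, Forall (fun x => o <= x < o + tsize t)%nat (PL t o).
Proof.
  apply (tree_ind2 (fun t => forall o, Forall (fun x => o <= x < o + tsize t)%nat (PL t o))).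
  intros ts H o. rewrite tsize_node. simpl.
  assert (forall c, (o < c)%nat -> Forall (fun x => x = o \/ c <= x < c + sz ts)%nat (go PL o ts c)).
  { induction H; intros c Hc; simpl; constructor; auto.
    apply Forall_app; split.
    - eapply Forall_impl; [|apply H]. simpl; intros; lia.
    - eapply Forall_impl; [|apply IHForall; lia]. simpl; intros; lia. }
  eapply Forall_impl; [|apply (H0 (S o)); lia]. simpl; intros; lia.
Qed.

Lemma go_range o ts c : (o < c)%nat -> Forall (fun x => x = o \/ c <= x < c + sz ts)%nat (go PL o ts c).
Proof.
  revert c; induction ts; intros c Hc; simpl; constructor; auto.
  apply Forall_app; split.
  - eapply Forall_impl; [|apply PL_range]. simpl; intros; lia.
  - eapply Forall_impl; [|apply IHts; lia]. simpl; intros; lia.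
Qed.

Definition q (ps : list nat) o := fun i => Nat.eqb (nth (i - 1) ps 0%nat) o.

Lemma filter_nil_region : forall o L A B,
  Forall (fun x => x <> o) L ->
  filter (q (A ++ L ++ B) o) (seq (S (length A)) (length L)) = [].
Proof.
  intros o L; induction L as [|x L IH]; intros A B HF; simpl; auto.
  inversion HF; subst.
  unfold q at 1. replace (S (length A) - 1)%nat with (length A) by lia.
  rewrite app_nth2, Nat.sub_diag by lia. simpl.
  destruct (Nat.eqb_spec x o); [congruence|].
  replace (A ++ x :: L ++ B) with ((A ++ [x]) ++ L ++ B) by (rewrite <- app_assoc; auto).
  replace (S (S (length A))) with (S (length (A ++ [x]))) by (rewrite length_app; simpl; lia).
  apply IH; auto.
Qed.

Lemma children_go : forall o ts c A1 B ps, ps = A1 ++ go PL o ts c ++ B ->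
  length A1 = (c - 1)%nat -> (o < c)%nat -> filter (q ps o) (seq c (sz ts)) = offs ts c.
Proof.
  intros o ts; induction ts as [|u l IH]; intros c A1 B ps Hps HA Hc; simpl; auto.
  rewrite seq_app. rewrite filter_app.
  pose proof (tsize_pos u). pose proof (PL_len u c).
  replace (tsize u) with (S (length (PL u c))) at 1 by lia.
  simpl. unfold q at 1. rewrite Hps. simpl in *.
  rewrite app_nth2 by lia. replace (c - 1 - length A1)%nat with 0%nat by lia. simpl.
  rewrite Nat.eqb_refl. f_equal.
  rewrite <- Hps.
  replace (filter (q ps o) (seq (S c) (length (PL u c)))) with (@nil nat).
  2:{ symmetry.
      replace ps with
        ((A1 ++ [o]) ++ PL u c ++ (go PL o l (c + tsize u) ++ B)) by (rewrite Hps, <- !app_assoc; auto).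
      replace (S c) with (S (length (A1 ++ [o]))) by (rewrite length_app; simpl; lia).
      apply filter_nil_region. eapply Forall_impl; [|apply PL_range]. simpl; intros; lia. }
  simpl. f_equal. apply (IH _ (A1 ++ o :: PL u c) B).
  - rewrite Hps. rewrite <- !app_assoc. simpl. auto.
  - rewrite length_app. simpl. lia.
  - lia.
Qed.

Lemma build_ok : forall t k ps fuel o A B, ps = A ++ PL t o ++ B -> length A = o ->
  Forall (fun x => x < o)%nat A -> Forall (fun x => x < o \/ o + tsize t <= x)%nat B ->
  k = S (length ps) -> (tsize t <= fuel)%nat -> iso (build k ps fuel o) t.
Proof.
  apply (tree_ind2 (fun t => forall k ps fuel o A B, ps = A ++ PL t o ++ B -> length A = o ->
  Forall (fun x => x < o)%nat A -> Forall (fun x => x < o \/ o + tsize t <= x)%nat B ->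
  k = S (length ps) -> (tsize t <= fuel)%nat -> iso (build k ps fuel o) t)).
  intros ts H k ps fuel o A B Hps HA HAF HBF Hk Hf.
  rewrite tsize_node in *. destruct fuel as [|f]; [lia|]. simpl build.
  assert (Hlen : length (PL (Node ts) o) = sz ts) by (rewrite PL_len, tsize_node; lia).
  unfold children.
  assert (E : filter (fun i => Nat.eqb (nth (i - 1) ps 0%nat) o) (seq 1 (k - 1)) = offs ts (S o)).
  { change (fun i => Nat.eqb (nth (i - 1) ps 0%nat) o) with (q ps o).
    replace (k - 1)%nat with (length A + (sz ts + length B))%nat
      by (rewrite Hk, Hps, !length_app, Hlen; lia).
    rewrite !seq_app, !filter_app.
    replace (filter (q ps o) (seq 1 (length A))) with (@nil nat).
    2:{ symmetry. rewrite Hps. apply (filter_nil_region o A []). eapply Forall_impl; [|apply HAF]. simpl; intros; lia. }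
    replace (filter (q ps o) (seq (1 + length A + sz ts) (length B))) with (@nil nat).
    2:{ symmetry. rewrite Hps.
        replace (A ++ PL (Node ts) o ++ B) with ((A ++ PL (Node ts) o) ++ B ++ []) by (rewrite app_nil_r, app_assoc; auto).
        replace (1 + length A + sz ts)%nat with (S (length (A ++ PL (Node ts) o))) by (rewrite length_app; lia).
        apply filter_nil_region. eapply Forall_impl; [|apply HBF]. simpl; intros; lia. }
    simpl. rewrite app_nil_r. replace (S (length A)) with (S o) by lia.
    apply (children_go o ts (S o) A B); auto; lia. }
  rewrite E. econstructor; [|apply Permutation_refl].
  assert (G : forall c A1, ps = A1 ++ go PL o ts c ++ B -> length A1 = (c - 1)%nat ->
     Forall (fun x => x < c)%nat A1 -> (o < c)%nat ->
     Forall (fun x => x < o \/ c + sz ts <= x)%nat B -> (sz ts <= f)%nat ->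
     Forall2 iso (map (build k ps f) (offs ts c)) ts).
  { clear E HBF Hlen Hf Hps HA HAF. induction H as [|u l Hu Hl IH]; intros c A1 HpsA HA1 HA1F Hc HB Hsz; simpl; constructor.
    - apply (Hu k ps f c (A1 ++ [o]) (go PL o l (c + tsize u) ++ B)).
      + rewrite HpsA. simpl. rewrite <- !app_assoc. reflexivity.
      + rewrite length_app; simpl; lia.
      + apply Forall_app; split; auto.
      + apply Forall_app; split.
        * eapply Forall_impl; [|apply go_range; lia]. simpl; intros; lia.
        * eapply Forall_impl; [|apply HB]. simpl; intros; lia.
      + auto.
      + simpl in Hsz; lia.
    - apply (IH (c + tsize u)%nat (A1 ++ o :: PL u c)).
      + rewrite HpsA. simpl. rewrite <- !app_assoc. reflexivity.
      + rewrite length_app. simpl. rewrite PL_len. pose proof (tsize_pos u). lia.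
      + apply Forall_app; split; [eapply Forall_impl; [|apply HA1F]; simpl; intros; lia|].
        constructor; [lia|]. eapply Forall_impl; [|apply PL_range]. simpl; intros; lia.
      + lia.
      + eapply Forall_impl; [|apply HB]. simpl; intros; lia.
      + simpl in Hsz; lia. }
  apply (G (S o) A); auto; try lia; eapply Forall_impl; try eassumption; simpl; intros; lia.
Qed.

Lemma pars_in : forall n l, length l = n -> (forall i, (i < n)%nat -> (nth i l 0 <= i)%nat) -> In l (pars n).
Proof.
  induction n; intros l Hl Hi.
  - destruct l; simpl in *; try lia. auto.
  - destruct (exists_last (l := l)) as [l' [a E]]; [intro; subst; simpl in *; lia|].
    subst l. rewrite length_app in Hl; simpl in Hl.
    cbn [pars]. apply in_flat_map. exists l'. split.
    + apply IHn; [lia|]. intros i Hi'. specialize (Hi i ltac:(lia)). rewrite app_nth1 in Hi by lia. auto.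
    + apply in_map_iff. exists a. split; auto. apply in_seq.
      specialize (Hi n ltac:(lia)). rewrite app_nth2 in Hi by lia.
      replace (n - length l')%nat with 0%nat in Hi by lia. simpl in Hi. lia.
Qed.

Lemma len_flat_map {A B} (f : A -> list B) m : forall L, (forall x, length (f x) = m) ->
  length (flat_map f L) = (m * length L)%nat.
Proof. induction L; intros H; [simpl; lia|]. cbn [flat_map length]. rewrite length_app, H, IHL by auto. lia. Qed.

Lemma pars_len n : length (pars n) = fact n.
Proof.
  induction n; [reflexivity|]. cbn [pars].
  rewrite (len_flat_map _ (S n)); [rewrite IHn; simpl; lia|].
  intros; cbv beta; rewrite length_map, length_seq; auto.
Qed.

Definition Valid o (l : list nat) := forall j, (j < length l)%nat -> (nth j l 0 <= o + j)%nat.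

Lemma Valid_nil o : Valid o [].
Proof. intros j H; simpl in H; lia. Qed.

Lemma Valid_cons o x l : (x <= o)%nat -> Valid (S o) l -> Valid o (x :: l).
Proof. intros Hx H [|j] Hj; simpl in *; [lia|]. specialize (H j ltac:(lia)). lia. Qed.

Lemma Valid_app o l1 l2 : Valid o l1 -> Valid (o + length l1) l2 -> Valid o (l1 ++ l2).
Proof.
  intros H1 H2 j Hj. rewrite length_app in Hj.
  destruct (Nat.lt_ge_cases j (length l1)).
  - rewrite app_nth1 by auto. auto.
  - rewrite app_nth2 by auto. specialize (H2 (j - length l1)%nat ltac:(lia)). lia.
Qed.

Lemma PL_valid : forall t o, Valid o (PL t o).
Proof.
  apply (tree_ind2 (fun t => forall o, Valid o (PL t o))).
  intros ts H o. simpl.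
  assert (forall c, (o < c)%nat -> Valid (c - 1) (go PL o ts c)).
  { induction H; intros c Hc; simpl; [apply Valid_nil|].
    apply Valid_cons; [lia|]. apply Valid_app.
    - replace (S (c - 1)) with c by lia. auto.
    - rewrite PL_len. replace (S (c - 1) + (tsize x - 1))%nat with (c + tsize x - 1)%nat
        by (pose proof (tsize_pos x); lia). apply IHForall. lia. }
  replace o with (S o - 1)%nat at 1 by lia. apply H0; lia.
Qed.

Lemma decP_true (P : Prop) : P -> decP P = true.
Proof. unfold decP; destruct excluded_middle_informative; tauto. Qed.

Lemma ell_pos t : (1 <= ell t)%nat.
Proof.
  unfold ell.
  assert (Hin : In (PL t 0) (pars (tsize t - 1))).
  { apply pars_in; [apply PL_len|]. intros i Hi. apply PL_valid. rewrite PL_len. auto. }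
  assert (In (PL t 0) (filter (fun ps => decP (iso (shape (tsize t) ps) t)) (pars (tsize t - 1)))).
  { apply filter_In. split; auto. apply decP_true. unfold shape.
    apply (build_ok t _ _ _ 0 [] []); simpl; auto.
    - rewrite app_nil_r; auto.
    - rewrite PL_len. pose proof (tsize_pos t). lia. }
  destruct (filter _ _); simpl in *; [contradiction|lia].
Qed.

Lemma ell_le t : (ell t <= fact (tsize t - 1))%nat.
Proof. unfold ell. rewrite <- pars_len. apply filter_length_le. Qed.


Local Open Scope R_scope.
Section Gen.
Variable f : R -> R.
Hypothesis fc : forall x, continuous f x.
Hypothesis fpos : forall x, 0 < f x.
Let F (x : R) : R := RInt f 0 x.

Lemma exR a b : ex_RInt f a b.
Proof. apply (@ex_RInt_continuous R_CompleteNormedModule); intros; apply fc. Qed.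

Lemma F_incr a b : a < b -> F a < F b.
Proof.
  intros H. unfold F.
  rewrite <- (RInt_Chasles f 0 a b) by apply exR.
  pose proof (RInt_gt_0 f a b H (fun x _ => fpos x) (fun x _ => fc x)).
  simpl. unfold plus; simpl. lra.
Qed.

Lemma F_cont x : continuous F x.
Proof.
  apply (@ex_derive_continuous R_AbsRing R_NormedModule). exists (f x). unfold F.
  apply (is_derive_RInt f (fun b => RInt f 0 b) 0); [|apply fc].
  apply filter_forall. intros; apply (@RInt_correct R_CompleteNormedModule), exR.
Qed.

Lemma gen_main x1 : 0 < x1 -> 1 < F x1 ->
  (exists rho, 0 < rho /\ F rho = 1 /\ (forall x, 0 < x -> F x = 1 -> rho <= x)) /\
  (forall rho, 0 < rho /\ F rho = 1 /\ (forall x, 0 < x -> F x = 1 -> rho <= x) -> rho < x1).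
Proof.
  intros Hx1 HF. assert (F0 : F 0 = 0) by (unfold F; rewrite RInt_point; auto).
  split.
  - destruct (IVT_gen_consistent F 0 x1 1 F_cont) as [r [Hr Hr1]].
    + rewrite F0, Rmin_left, Rmax_right; lra.
    + rewrite Rmin_left, Rmax_right in Hr by lra.
      assert (r <> 0) by (intro; subst; lra).
      exists r. split; [lra|]. split; auto.
      intros y Hy Fy. destruct (Rle_lt_dec r y); auto.
      pose proof (F_incr y r r0). lra.
  - intros rho [H1 [H2 H3]]. destruct (Rlt_le_dec rho x1); auto.
    destruct (Req_dec rho x1); [subst; lra|].
    pose proof (F_incr x1 rho ltac:(lra)). lra.
Qed.

Lemma F_lower (g G : R -> R) (x : R) : 0 < x -> (forall v, continuous g v) ->
  (forall v, 0 <= v <= x -> is_derive G v (g v)) ->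
  (forall v, 0 < v < x -> g v <= f v) -> G x - G 0 <= F x.
Proof.
  intros Hx gc Gd Hle. unfold F.
  assert (is_RInt g 0 x (minus (G x) (G 0))).
  { apply (@is_RInt_derive R_CompleteNormedModule).
    - intros; apply Gd. rewrite Rmin_left, Rmax_right in H by lra. auto.
    - intros; apply gc. }
  apply (@is_RInt_unique R_CompleteNormedModule) in H. change (minus (G x) (G 0)) with (G x - G 0) in H.
  rewrite <- H. apply RInt_le; auto; [lra| |apply exR].
  apply (@ex_RInt_continuous R_CompleteNormedModule); auto.
Qed.
End Gen.

Lemma exp_pow a n : exp a ^ n = exp (INR n * a).
Proof.
  induction n; simpl. rewrite Rmult_0_l, exp_0; auto.
  rewrite IHn, <- exp_plus. f_equal. destruct n; simpl; lra.
Qed.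

Lemma exp58 : exp (5/8) < 2.
Proof.
  destruct (Rlt_le_dec (exp (5/8)) 2); auto.
  assert (exp (5/8) ^ 8 >= 2 ^ 8).
  { apply Rle_ge, pow_incr; lra. }
  rewrite exp_pow in H. replace (INR 8 * (5/8)) with (INR 5 * 1) in H by (simpl; lra).
  rewrite <- exp_pow in H. pose proof exp_le_3. pose proof (exp_pos 1).
  assert (exp 1 ^ 5 <= 3 ^ 5) by (apply pow_incr; lra). simpl in *. lra.
Qed.

Lemma RInt_G (g G : R -> R) (x : R) : 0 <= x ->
  (forall v, 0 <= v <= x -> is_derive G v (g v)) ->
  (forall v, continuous g v) -> RInt g 0 x = G x - G 0.
Proof.
  intros Hx Gd gc.
  assert (is_RInt g 0 x (minus (G x) (G 0))).
  { apply (@is_RInt_derive R_CompleteNormedModule).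
    - intros; apply Gd. rewrite Rmin_left, Rmax_right in H by lra. auto.
    - intros; apply gc. }
  apply (@is_RInt_unique R_CompleteNormedModule) in H. exact H.
Qed.

Lemma cont_all (g : R -> R) : (forall v, ex_derive g v) -> forall v, continuous g v.
Proof. intros H v. apply (@ex_derive_continuous R_AbsRing R_NormedModule). auto. Qed.

Lemma exR_all (g : R -> R) a b : (forall v, continuous g v) -> ex_RInt g a b.
Proof. intros; apply (@ex_RInt_continuous R_CompleteNormedModule); auto. Qed.

Lemma Iexp y : 0 <= y -> RInt (fun s => exp (- s)) 0 y = 1 - exp (- y).
Proof.
  intros Hy. rewrite (RInt_G _ (fun s => - exp (- s))); auto.
  - rewrite Ropp_0, exp_0. lra.
  - intros. auto_derive; auto. lra.
  - apply cont_all. intros; auto_derive; auto.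
Qed.

Lemma exp_up2 y : 0 <= y -> exp (- y) <= 1 - y + y^2/2.
Proof.
  intros Hy. destruct (Req_dec y 0). { subst. rewrite Ropp_0, exp_0. lra. }
  assert (RInt (fun s => 1 - s) 0 y <= RInt (fun s => exp (- s)) 0 y).
  { apply RInt_le; try lra.
    - apply exR_all, cont_all; intros; auto_derive; auto.
    - apply exR_all, cont_all; intros; auto_derive; auto.
    - intros. pose proof (exp_ineq1_le (- x)). lra. }
  rewrite Iexp in H0 by lra.
  rewrite (RInt_G _ (fun s => s - s^2/2)) in H0; auto.
  - lra.
  - intros. auto_derive; auto. lra.
  - apply cont_all. intros; auto_derive; auto.
Qed.

Lemma exp_low3 y : 0 <= y -> 1 - y + y^2/2 - y^3/6 <= exp (- y).
Proof.
  intros Hy. destruct (Req_dec y 0). { subst. rewrite Ropp_0, exp_0. lra. }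
  assert (RInt (fun s => exp (- s)) 0 y <= RInt (fun s => 1 - s + s^2/2) 0 y).
  { apply RInt_le; try lra.
    - apply exR_all, cont_all; intros; auto_derive; auto.
    - apply exR_all, cont_all; intros; auto_derive; auto.
    - intros. apply exp_up2. lra. }
  rewrite Iexp in H0 by lra.
  rewrite (RInt_G _ (fun s => s - s^2/2 + s^3/6)) in H0; auto.
  - lra.
  - intros. auto_derive; auto. lra.
  - apply cont_all. intros; auto_derive; auto.
Qed.

Lemma fcont (w : R) (k : nat) : forall x, continuous (fun v => exp (- (w * v ^ k))) x.
Proof. apply cont_all. intros; auto_derive; auto. Qed.

Lemma fpos (w : R) (k : nat) : forall x, 0 < (fun v => exp (- (w * v ^ k))) x.
Proof. intros; apply exp_pos. Qed.

Lemma bound_k2 (w : R) : w = /2 -> 1 < RInt (fun v => exp (- (w * v ^ 2))) 0 (1 + 2 * w / INR 2).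
Proof.
  intros ->. replace (1 + 2 * / 2 / INR 2) with (3/2) by (simpl; field).
  eapply Rlt_le_trans; [|apply (F_lower _ (fcont (/2) 2)
     (fun v => 1 - (/2 * v^2) + (/2 * v^2)^2/2 - (/2 * v^2)^3/6)
     (fun v => v - v^3/6 + v^5/40 - v^7/336))].
  - simpl. lra.
  - lra.
  - apply cont_all. intros; auto_derive; auto.
  - intros. auto_derive; auto. field.
  - intros. apply exp_low3. pose proof (pow2_ge_0 v). lra.
Qed.

Lemma bound_gen (w : R) (k : nat) : (3 <= k)%nat -> 0 < w -> w <= / INR k ->
  1 < RInt (fun v => exp (- (w * v ^ k))) 0 (1 + 2 * w / INR k).
Proof.
  intros Hk Hw Hw1.
  assert (HK : 3 <= INR k) by (replace 3 with (INR 3) by (simpl; lra); apply le_INR; auto).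
  set (x1 := 1 + 2 * w / INR k).
  assert (0 < 2 * w / INR k) by (apply Rdiv_lt_0_compat; lra).
  assert (Hx1 : 1 < x1) by (unfold x1; lra).
  assert (Hx1b : x1 <= 1 + 2 / (INR k * INR k)).
  { unfold x1. apply Rplus_le_compat_l. unfold Rdiv.
    rewrite Rinv_mult. rewrite <- Rmult_assoc. apply Rmult_le_compat_r.
    - apply Rlt_le, Rinv_0_lt_compat; lra.
    - lra. }
  assert (Hpow : x1 ^ S k < 2 * (INR k + 1) / INR k).
  { apply Rle_lt_trans with ((1 + 2 / (INR k * INR k)) ^ S k).
    { apply pow_incr; lra. }
    destruct (Nat.eq_dec k 3) as [->|Hk4].
    - simpl. lra.
    - assert (HK4 : 4 <= INR k) by (replace 4 with (INR 4) by (simpl; lra); apply le_INR; lia).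
      assert (Ha : 0 <= 2 / (INR k * INR k)) by (apply Rlt_le, Rdiv_lt_0_compat; nra).
      apply Rle_lt_trans with (exp (2 / (INR k * INR k)) ^ S k).
      { apply pow_incr. split; [lra|]. pose proof (exp_ineq1_le (2 / (INR k * INR k))). lra. }
      rewrite exp_pow, S_INR.
      assert (E1 : INR k * INR k * ((INR k + 1) * (2 / (INR k * INR k))) = 2 * (INR k + 1)) by (field; lra).
      assert (E2 : (INR k + 1) * (2 / (INR k * INR k)) <= 5/8).
      { apply Rmult_le_reg_l with (INR k * INR k); [nra|]. rewrite E1. nra. }
      apply Rle_lt_trans with (exp (5/8)).
      { destruct (Rle_lt_or_eq_dec _ _ E2); [apply Rlt_le, exp_increasing; auto|rewrite e; lra]. }
      pose proof exp58.
      apply Rlt_le_trans with 2; auto.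
      apply Rmult_le_reg_l with (INR k); [lra|]. unfold Rdiv. field_simplify; lra. }
  eapply Rlt_le_trans; [|apply (F_lower _ (fcont w k) (fun v => 1 - w * v ^ k)
     (fun v => v - w * v ^ (S k) / INR (S k)))].
  - rewrite pow_i by lia. rewrite S_INR.
    assert (x1 ^ S k / (INR k + 1) < 2 / INR k).
    { apply Rmult_lt_reg_l with (INR k + 1); [lra|].
      replace ((INR k + 1) * (x1 ^ S k / (INR k + 1))) with (x1 ^ S k) by (field; lra).
      replace ((INR k + 1) * (2 / INR k)) with (2 * (INR k + 1) / INR k) by (field; lra).
      exact Hpow. }
    assert (w * (x1 ^ S k / (INR k + 1)) < w * (2 / INR k)) by (apply Rmult_lt_compat_l; auto).
    unfold x1 at 1. unfold Rdiv in *. lra.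
  - lra.
  - apply cont_all. intros; auto_derive; auto.
  - intros. auto_derive; auto.
    change (match k with 0%nat => 1 | S _ => INR k + 1 end) with (INR (S k)).
    field. apply not_0_INR. lia.
  - intros. pose proof (exp_ineq1_le (- (w * v ^ k))). lra.
Qed.

Theorem lemma2p1 (t : tree) (Hk : (2 <= tsize t)%nat) :
  (exists rho, is_rho_tilde t rho) /\
  (forall rho, is_rho_tilde t rho -> rho < 1 + 2 * wt t / INR (tsize t)).
Proof.
  pose proof (ell_pos t) as Hl1. pose proof (ell_le t) as Hl2.
  assert (Hf : fact (tsize t) = (tsize t * fact (tsize t - 1))%nat).
  { destruct (tsize t) as [|m]; [lia|]. simpl. replace (m - 0)%nat with m by lia. lia. }
  assert (HK : 2 <= INR (tsize t)) by (replace 2 with (INR 2) by (simpl; lra); apply le_INR; auto).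
  assert (HF1 : 1 <= INR (fact (tsize t - 1))) by (replace 1 with (INR 1) by auto; apply le_INR; pose proof (lt_O_fact (tsize t - 1)); lia).
  assert (Hw0 : 0 < wt t).
  { unfold wt. apply Rdiv_lt_0_compat.
    - replace 0 with (INR 0) by auto. apply lt_INR. lia.
    - replace 0 with (INR 0) by auto. apply lt_INR. apply lt_O_fact. }
  assert (Hw1 : wt t <= / INR (tsize t)).
  { unfold wt. rewrite Hf, mult_INR.
    apply le_INR in Hl2.
    apply Rmult_le_reg_l with (INR (tsize t) * INR (fact (tsize t - 1))); [nra|].
    field_simplify; try lra. }
  assert (Hb : 1 < Ft t (1 + 2 * wt t / INR (tsize t))).
  { unfold Ft. destruct (Nat.eq_dec (tsize t) 2) as [E|E].
    - rewrite E. apply bound_k2.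
      unfold wt. rewrite E. rewrite E in Hl2. simpl in Hl2.
      replace (ell t) with 1%nat by lia. simpl. field.
    - apply bound_gen; auto. lia. }
  assert (Hx1 : 0 < 1 + 2 * wt t / INR (tsize t)).
  { assert (0 < 2 * wt t / INR (tsize t)) by (apply Rdiv_lt_0_compat; lra). lra. }
  destruct (gen_main (fun v => exp (- (wt t * v ^ tsize t))) (fcont _ _) (fpos _ _) _ Hx1 Hb) as [H1 H2].
  split.
  - destruct H1 as [rho Hr]. exists rho. exact Hr.
  - intros rho Hr. apply H2. exact Hr.
Qed.
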